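(* Let $\mathcal{X}$ be a finite nonempty set of types, $n=(n_x)_{x\in\mathcal{X}}$ nonnegative integers, and $\Phi=(\Phi_{xy})_{x,y\in\mathcal{X}}$ a real matrix, not necessarily symmetric. Define the symmetric matrix $\Phi'_{xy}=\max(\Phi_{xy},\Phi_{yx})$. Then: (i) $\mathcal{W}'_{\mathcal{P}}(n,\Phi)=\mathcal{W}_{\mathcal{P}}(n,\Phi')$; (ii) the nonexchangeable roommate problem with population $n$ and surplus $\Phi$ has a stable matching if and only if the (symmetric) roommate problem with population $n$ and surplus $\Phi'$ has a stable matching.
   Context: Nonexchangeable roommate problem: $n_x$ individuals of type $x$; an ordered pair $(x,y)$ (first partner of type $x$ in role 1, second of type $y$ in role 2; $x=y$ allowed) generates surplus $\Phi_{xy}$; singles get $0$. A matching is $\pi=(\pi_{xy})_{x,y\in\mathcal{X}}$, $\pi_{xy}\in\mathbb{N}$ the number of ordered $(x,y)$ pairs, with $\sum_{y\in\mathcal{X}}(\pi_{xy}+\pi_{yx})\le n_x$ for all $x$; its surplus is $\sum_{x,y}\pi_{xy}\Phi_{xy}$, and $\mathcal{W}'_{\mathcal{P}}(n,\Phi)$ is the maximum of this surplus over such $\pi$. A stable outcome is $(\pi,u)$ with $\pi$ feasible, $u\in\mathbb{R}^{\mathcal{X}}$, $\sum_x n_xu_x=\sum_{x,y}\pi_{xy}\Phi_{xy}$, $u_x\ge0$ and $u_x+u_y\ge\Phi_{xy}$ for all $x,y$; $\pi$ is a stable matching if such $u$ exists. Symmetric roommate problem with symmetric surplus $\Psi$: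 feasible matchings $\mathcal{P}(n)=\{\mu\in\mathbb{N}^{\mathcal{X}\times\mathcal{X}}:\ \mu_{xy}=\mu_{yx},\ 2\mu_{xx}+\sum_{y\ne x}\mu_{xy}\le n_x\ \forall x\}$, surplus $S_R(\mu;\Psi)=\sum_x\mu_{xx}\Psi_{xx}+\sum_{x\ne y}\mu_{xy}\Psi_{xy}/2$, $\mathcal{W}_{\mathcal{P}}(n,\Psi)=\max_{\mu\in\mathcal{P}(n)}S_R(\mu;\Psi)$; $\mu$ is stable if there is $u\in\mathbb{R}^{\mathcal{X}}$ with $\sum_x n_xu_x=S_R(\mu;\Psi)$, $u_x\ge0$, $u_x+u_y\ge\Psi_{xy}$ for all $x,y$. *)

(* Defs.v *)
From mathcomp Require Import all_boot all_order all_algebra.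
Set Implicit Arguments. Unset Strict Implicit. Unset Printing Implicit Defensive.
Import Order.TTheory GRing.Theory Num.Theory.
Local Open Scope ring_scope.

Section Roommate.
Variables (R : realFieldType) (X : finType).

(* pi x y = number of ordered (x,y) pairs *)
Definition feasibleNX (n : X -> nat) (pi : X -> X -> nat) : bool :=
  [forall x, (\sum_(y : X) (pi x y + pi y x) <= n x)%N].

Definition surplusNX (Phi : X -> X -> R) (pi : X -> X -> nat) : R :=
  \sum_(x : X) \sum_(y : X) (pi x y)%:R * Phi x y.

Definition popsize (n : X -> nat) : nat := (\sum_(x : X) n x)%N.

(* The
   enumeration over entries bounded by popsize n covers every feasible
   matching; the zero matching is feasible with surplus 0, so the default 0
   of the max is harmless. *)
Definition W'P (n : X -> nat) (Phi : X -> X -> R) : R :=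
  \big[Num.max/0]_(p : {ffun X * X -> 'I_(popsize n).+1}
                   | feasibleNX n (fun x y => nat_of_ord (p (x, y))))
     surplusNX Phi (fun x y => nat_of_ord (p (x, y))).

Definition stable_outcomeNX (n : X -> nat) (Phi : X -> X -> R)
  (pi : X -> X -> nat) (u : X -> R) : Prop :=
  [/\ feasibleNX n pi,
      \sum_(x : X) (n x)%:R * u x = surplusNX Phi pi,
      forall x, 0 <= u x &
      forall x y, Phi x y <= u x + u y].

Definition stable_matchingNX (n : X -> nat) (Phi : X -> X -> R)
  (pi : X -> X -> nat) : Prop := exists u, stable_outcomeNX n Phi pi u.

Definition has_stable_matchingNX (n : X -> nat) (Phi : X -> X -> R) : Prop :=
  exists pi, stable_matchingNX n Phi pi.

Definition feasibleR (n : X -> nat) (mu : X -> X -> nat) : bool :=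
  [forall x, forall y, mu x y == mu y x] &&
  [forall x, (2 * mu x x + \sum_(y : X | y != x) mu x y <= n x)%N].

Definition surplusR (Psi : X -> X -> R) (mu : X -> X -> nat) : R :=
  \sum_(x : X) (mu x x)%:R * Psi x x
  + \sum_(x : X) \sum_(y : X | y != x) (mu x y)%:R * Psi x y / 2.

Definition WP (n : X -> nat) (Psi : X -> X -> R) : R :=
  \big[Num.max/0]_(p : {ffun X * X -> 'I_(popsize n).+1}
                   | feasibleR n (fun x y => nat_of_ord (p (x, y))))
     surplusR Psi (fun x y => nat_of_ord (p (x, y))).

Definition stable_matchingR (n : X -> nat) (Psi : X -> X -> R)
  (mu : X -> X -> nat) : Prop :=
  feasibleR n mu /\
  exists u : X -> R,
    [/\ \sum_(x : X) (n x)%:R * u x = surplusR Psi mu,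
        forall x, 0 <= u x &
        forall x y, Psi x y <= u x + u y].

Definition has_stable_matchingR (n : X -> nat) (Psi : X -> X -> R) : Prop :=
  exists mu, stable_matchingR n Psi mu.

Definition symmax (Phi : X -> X -> R) : X -> X -> R :=
  fun x y => Num.max (Phi x y) (Phi y x).

End Roommate.

(* Main.v *)
Require Import Defs.
From mathcomp Require Import all_boot all_order all_algebra ring.
From Stdlib Require Import FunctionalExtensionality.
Import Order.TTheory GRing.Theory Num.Theory.
Local Open Scope ring_scope.

Lemma bigmax_ge0 (R : realFieldType) (I : finType) (P : pred I) (F : I -> R) :
  0 <= \big[Num.max/0]_(i | P i) F i.
Proof.
apply: (big_rec (fun v => 0 <= v)) => // i v _ hv.
by rewrite le_max hv orbT.
Qed.

Lemma bigmax_ub (R : realFieldType) (I : finType) (P : pred I) (F : I -> R) c :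
  0 <= c -> (forall i, P i -> F i <= c) -> \big[Num.max/0]_(i | P i) F i <= c.
Proof.
move=> c0 hF; apply: (big_rec (fun v => v <= c)) => // i v Pi hv.
by rewrite ge_max hv hF.
Qed.

Lemma bigmax_lb (R : realFieldType) (I : finType) (P : pred I) (F : I -> R) i :
  P i -> F i <= \big[Num.max/0]_(j | P j) F j.
Proof.
move=> Pi; have : i \in index_enum I by rewrite mem_index_enum.
elim: (index_enum I) => [//|a r IH]; rewrite inE big_cons.
case/orP=> [/eqP <-|/IH h]; first by rewrite Pi le_max lexx.
by case: (P a) => //; rewrite le_max h orbT.
Qed.

Lemma offdiag_split (R : realFieldType) (X : finType) (f : X -> X -> R) :
  \sum_x \sum_y f x y = \sum_x f x x + \sum_x \sum_(y | y != x) f x y.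
Proof.
rewrite -big_split /=; apply: eq_bigr => x _.
by rewrite (bigD1 x).
Qed.

Lemma offdiag_sym (R : realFieldType) (X : finType) (f : X -> X -> R) :
  \sum_x \sum_(y | y != x) f x y = \sum_x \sum_(y | y != x) f y x.
Proof.
apply: (@addrI _ (\sum_x f x x)).
rewrite -offdiag_split.
rewrite (_ : \sum_x f x x = \sum_x (fun a b => f b a) x x) //.
rewrite -(@offdiag_split _ _ (fun a b => f b a)) /=.
exact: exchange_big.
Qed.

Lemma offdiag_split_nat (X : finType) (f : X -> nat) x :
  (\sum_y f y = f x + \sum_(y | y != x) f y)%N.
Proof. by rewrite (bigD1 x). Qed.

Set Implicit Arguments. Unset Strict Implicit.

Lemma half_double (R : realFieldType) (a : R) : (a + a) / 2 = a.
Proof. by field. Qed.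

Lemma sum_half (R : realFieldType) (X : finType) (h : X -> X -> R) :
  \sum_x \sum_(y | y != x) h x y / 2 = (\sum_x \sum_(y | y != x) h x y) / 2.
Proof. rewrite mulr_suml; apply: eq_bigr => x _; by rewrite mulr_suml. Qed.

Lemma pair_trick (R : realFieldType) (X : finType) (g h : X -> X -> R) :
  (forall x y, y != x -> g x y + g y x = h x y) ->
  \sum_x \sum_(y | y != x) g x y = (\sum_x \sum_(y | y != x) h x y) / 2.
Proof.
move=> H.
rewrite -[LHS]half_double; congr (_ / 2).
rewrite {2}offdiag_sym -big_split; apply: eq_bigr => x _.
rewrite -big_split; apply: eq_bigr => y hy; exact: H.
Qed.

Definition toR (X : finType) (pi : X -> X -> nat) : X -> X -> nat :=
  fun x y => if x == y then pi x x else (pi x y + pi y x)%N.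

Definition better (R : realFieldType) (X : finType) (Phi : X -> X -> R) x y : bool :=
  (Phi y x < Phi x y) || ((Phi x y == Phi y x) && (enum_rank x < enum_rank y)%N).

Definition toNX (R : realFieldType) (X : finType) (Phi : X -> X -> R)
  (mu : X -> X -> nat) : X -> X -> nat :=
  fun x y => if x == y then mu x x else if better Phi x y then mu x y else 0%N.

Lemma toR_diag (X : finType) (pi : X -> X -> nat) x : toR pi x x = pi x x.
Proof. by rewrite /toR eqxx. Qed.
Lemma toR_off (X : finType) (pi : X -> X -> nat) x y : y != x -> toR pi x y = (pi x y + pi y x)%N.
Proof. by move=> h; rewrite /toR eq_sym (negbTE h). Qed.
Lemma toNX_diag (R : realFieldType) (X : finType) (Phi : X -> X -> R) mu x :
  toNX Phi mu x x = mu x x.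
Proof. by rewrite /toNX eqxx. Qed.

Lemma better_xor (R : realFieldType) (X : finType) (Phi : X -> X -> R) x y :
  x != y -> better Phi y x = ~~ better Phi x y.
Proof.
move=> hxy; rewrite /better; case: (ltgtP (Phi x y) (Phi y x)) => h //=.
case: (ltngtP (enum_rank x) (enum_rank y)) => // /val_inj/enum_rank_inj e.
by rewrite e eqxx in hxy.
Qed.

Lemma better_le (R : realFieldType) (X : finType) (Phi : X -> X -> R) x y :
  better Phi x y -> Phi y x <= Phi x y.
Proof. case/orP => [/ltW //| /andP [/eqP -> _]]; exact: lexx. Qed.

Lemma symmax_better (R : realFieldType) (X : finType) (Phi : X -> X -> R) x y :
  better Phi x y -> symmax Phi x y = Phi x y.
Proof. by move=> h; rewrite /symmax max_l // better_le. Qed.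

Lemma symmaxC (R : realFieldType) (X : finType) (Phi : X -> X -> R) x y :
  symmax Phi x y = symmax Phi y x.
Proof. by rewrite /symmax maxC. Qed.

Lemma toNX_pair_nat (R : realFieldType) (X : finType) (Phi : X -> X -> R) mu x y :
  (forall a b, mu a b = mu b a) -> y != x ->
  (toNX Phi mu x y + toNX Phi mu y x)%N = mu x y.
Proof.
move=> sym hyx; have hxy : x != y by rewrite eq_sym.
rewrite /toNX (negbTE hxy) (negbTE hyx) (better_xor Phi hxy).
case: (better Phi x y) => /=; [by rewrite addn0 | by rewrite add0n sym].
Qed.

Lemma toNX_pair_R (R : realFieldType) (X : finType) (Phi : X -> X -> R) mu x y :
  (forall a b, mu a b = mu b a) -> y != x ->
  (toNX Phi mu x y)%:R * Phi x y + (toNX Phi mu y x)%:R * Phi y x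
  = (mu x y)%:R * symmax Phi x y.
Proof.
move=> sym hyx; have hxy : x != y by rewrite eq_sym.
rewrite /toNX (negbTE hxy) (negbTE hyx) (better_xor Phi hxy).
case hb: (better Phi x y) => /=.
  by rewrite mul0r addr0 symmax_better.
have hb' : better Phi y x by rewrite better_xor // hb.
by rewrite mul0r add0r symmaxC symmax_better // sym.
Qed.

Lemma n_le_pop (X : finType) (n : X -> nat) x : (n x <= popsize n)%N.
Proof. by rewrite /popsize (bigD1 x) //= leq_addr. Qed.

Lemma feasNX_bound (X : finType) (n : X -> nat) pi x y :
  feasibleNX n pi -> (pi x y <= popsize n)%N.
Proof.
move/forallP => h; apply: leq_trans (n_le_pop n x).
apply: leq_trans (h x); rewrite (bigD1 y) //=.
by rewrite -addnA leq_addr.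
Qed.

Lemma feasR_bound (X : finType) (n : X -> nat) mu x y :
  feasibleR n mu -> (mu x y <= popsize n)%N.
Proof.
case/andP => _ /forallP h; apply: leq_trans (n_le_pop n x).
apply: leq_trans (h x).
case: (eqVneq y x) => [->|hyx].
  by rewrite mul2n -addnn -addnA leq_addr.
by rewrite (bigD1 y) //= addnCA leq_addr.
Qed.

Lemma rep (X : finType) (n : X -> nat) (m : X -> X -> nat) :
  (forall x y, m x y <= popsize n)%N ->
  exists p : {ffun X * X -> 'I_(popsize n).+1},
    (fun x y => nat_of_ord (p (x, y))) = m.
Proof.
move=> hm; exists [ffun xy => inord (m xy.1 xy.2)].
apply: functional_extensionality => x; apply: functional_extensionality => y.
by rewrite ffunE inordK // ltnS.
Qed.


Lemma feas_toR (X : finType) (n : X -> nat) pi :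
  feasibleNX n pi -> feasibleR n (toR pi).
Proof.
move/forallP => h; apply/andP; split.
  apply/forallP=> x; apply/forallP=> y.
  case: (eqVneq y x) => [->|hyx] //.
  have hxy : x != y by rewrite eq_sym.
  by rewrite (toR_off pi hyx) (toR_off pi hxy) addnC.
apply/forallP=> x; have H := h x.
rewrite (@offdiag_split_nat _ (fun y => pi x y + pi y x)%N x) in H.
rewrite toR_diag (eq_bigr (fun y => pi x y + pi y x)%N); last by move=> y hy; rewrite toR_off.
by rewrite mul2n -addnn.
Qed.

Lemma feas_toNX (R : realFieldType) (X : finType) (n : X -> nat) (Phi : X -> X -> R) mu :
  feasibleR n mu -> feasibleNX n (toNX Phi mu).
Proof.
case/andP => /forallP hs /forallP hb.
have sym : forall a b, mu a b = mu b a by move=> a b; apply/eqP; exact: (forallP (hs a) b).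
apply/forallP=> x; have H := hb x.
rewrite (@offdiag_split_nat _ (fun y => toNX Phi mu x y + toNX Phi mu y x)%N x) toNX_diag.
rewrite (eq_bigr (fun y => mu x y)); last by move=> y hy; rewrite toNX_pair_nat.
by rewrite addnn -mul2n.
Qed.

Lemma surp_toR (R : realFieldType) (X : finType) (Phi : X -> X -> R) pi :
  surplusNX Phi pi <= surplusR (symmax Phi) (toR pi).
Proof.
rewrite /surplusNX /surplusR (@offdiag_split _ _ (fun x y => (pi x y)%:R * Phi x y)).
apply: lerD.
  by apply: ler_sum => x _; rewrite toR_diag /symmax maxxx.
rewrite sum_half -(@pair_trick _ _ (fun x y => (pi x y)%:R * symmax Phi x y)); last first.
  by move=> x y hyx; rewrite toR_off // natrD mulrDl (symmaxC Phi y x).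
apply: ler_sum => x _; apply: ler_sum => y _.
by apply: ler_wpM2l; [exact: ler0n | rewrite /symmax le_max lexx].
Qed.

Lemma surp_toNX (R : realFieldType) (X : finType) (n : X -> nat) (Phi : X -> X -> R) mu :
  feasibleR n mu -> surplusNX Phi (toNX Phi mu) = surplusR (symmax Phi) mu.
Proof.
case/andP => /forallP hs _.
have sym : forall a b, mu a b = mu b a by move=> a b; apply/eqP; exact: (forallP (hs a) b).
rewrite /surplusNX /surplusR (@offdiag_split _ _ (fun x y => (toNX Phi mu x y)%:R * Phi x y)).
congr (_ + _).
  by apply: eq_bigr => x _; rewrite toNX_diag /symmax maxxx.
rewrite sum_half; apply: pair_trick => x y hyx.
exact: toNX_pair_R.
Qed.

Lemma weak_dual (R : realFieldType) (X : finType) (n : X -> nat) (Psi : X -> X -> R) mu (u : X -> R) :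
  feasibleR n mu -> (forall x, 0 <= u x) -> (forall x y, Psi x y <= u x + u y) ->
  surplusR Psi mu <= \sum_x (n x)%:R * u x.
Proof.
case/andP => /forallP hs /forallP hb u0 hP.
have sym : forall a b, mu a b = mu b a by move=> a b; apply/eqP; exact: (forallP (hs a) b).
apply: (@le_trans _ _ (\sum_x (mu x x)%:R * (u x + u x)
   + \sum_x \sum_(y | y != x) (mu x y)%:R * (u x + u y) / 2)).
  apply: lerD; first by apply: ler_sum => x _; apply: ler_wpM2l; [exact: ler0n | exact: hP].
  apply: ler_sum => x _; apply: ler_sum => y _.
  apply: ler_wpM2r; first by rewrite invr_ge0 ler0n.
  by apply: ler_wpM2l; [exact: ler0n | exact: hP].
rewrite sum_half -(@pair_trick _ _ (fun x y => (mu x y)%:R * u x)); last first.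
  by move=> x y hyx; rewrite (sym y x) mulrDr.
rewrite -big_split /=; apply: ler_sum => x _.
apply: (@le_trans _ _ ((2 * mu x x + \sum_(y | y != x) mu x y)%N%:R * u x)).
  rewrite natrD natrM natr_sum mulrDl -mulr_suml.
  apply: lerD; last exact: lexx.
  by rewrite [X in X <= _](_ : _ = 2 * (mu x x)%:R * u x) //; ring.
apply: ler_wpM2r; first exact: u0.
by rewrite ler_nat.
Qed.


Unset Implicit Arguments.
Theorem theorem4 (R : realFieldType) (X : finType) (hX : (0 < #|X|)%N)
  (n : X -> nat) (Phi : X -> X -> R) :
  W'P n Phi = WP n (symmax Phi) /\
  (has_stable_matchingNX n Phi <-> has_stable_matchingR n (symmax Phi)).
Proof.
split.
  apply/le_anti/andP; split.
    apply: bigmax_ub; first exact: bigmax_ge0.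
    move=> p hp.
    set pi := (fun x y => nat_of_ord (p (x, y))) in hp *.
    have fR := feas_toR hp.
    have [p' ep'] := rep (fun x y => feasR_bound x y fR).
    apply: le_trans (surp_toR Phi pi) _.
    rewrite -ep'; apply: (@bigmax_lb _ _ _ _ p'); by rewrite ep'.
  apply: bigmax_ub; first exact: bigmax_ge0.
  move=> p hp.
  set mu := (fun x y => nat_of_ord (p (x, y))) in hp *.
  have fN := feas_toNX Phi hp.
  have [p' ep'] := rep (fun x y => feasNX_bound x y fN).
  rewrite -(surp_toNX Phi hp) -ep'; apply: (@bigmax_lb _ _ _ _ p'); by rewrite ep'.
split.
  case=> pi [u [hf hs hu hP]].
  have hP' : forall x y, symmax Phi x y <= u x + u y.
    by move=> x y; rewrite /symmax ge_max hP /= addrC hP.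
  exists (toR pi); split; first exact: feas_toR.
  exists u; split => //.
  apply/le_anti/andP; split.
    by rewrite hs; exact: surp_toR.
  by apply: weak_dual => //; exact: feas_toR.
case=> mu [hf [u [hs hu hP]]].
exists (toNX Phi mu); exists u; split => //.
  exact: feas_toNX.
  by rewrite (surp_toNX Phi hf).
move=> x y; apply: le_trans (hP x y).
by rewrite /symmax le_max lexx.
Qed.
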